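(* Let $\alpha>2$ and let $K\ge3$ be an integer. Set $C_{2,K}=\frac1K$ if $K$ is even and $C_{2,K}=\frac1K\cdot\frac{K^2}{K^2-1}$ if $K$ is odd. Then for every $p,q\in\operatorname{relint}(\Delta^K)$, the inequality \[ D_\alpha(p\Vert q)\ \ge\ \frac C2\,\|p-q\|_1^2 \] holds with each of the following choices of $C$: (1) $C=C_{2,K}\cdot\left(\min_{k\in[K]}\min\{p_k,q_k\}\right)^{\alpha-2}$; (2) $C=C_{2,K}\cdot\frac{2}{\alpha(\alpha-1)}\cdot\left(\min_{k\in[K]}p_k\right)^{\alpha-2}$; (3) $C=C_{2,K}\cdot\frac{2}{\alpha}\cdot\left(\min_{k\in[K]}q_k\right)^{\alpha-2}$.
   Context: $[K]=\{1,\dots,K\}$, $\Delta^K=\{p\in[0,1]^K:\sum_k p_k=1\}$, $\operatorname{relint}(\Delta^K)=\Delta^K\cap(0,1)^K$. For $p,q\in(0,+\infty)^K$ and $\alpha\notin\{0,1\}$, $D_\alpha(p\Vert q)=\frac1\alpha\sum_{k=1}^K\frac{p_k^\alpha+(\alpha-1)q_k^\alpha-\alpha p_kq_k^{\alpha-1}}{\alpha-1}$, the Bregman divergence of $-S_\alpha$ with $S_\alpha(p)=\frac{\sum_kp_k^\alpha}{\alpha(1-\alpha)}$. $\|x\|_1=\sum_k|x_k|$. *)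

(* Defs.v *)
From HB Require Import structures.
From mathcomp Require Import all_boot all_order all_algebra.
From mathcomp Require Import all_classical all_reals all_analysis.
Set Implicit Arguments. Unset Strict Implicit. Unset Printing Implicit Defensive.
Import Order.TTheory GRing.Theory Num.Theory.
Local Open Scope ring_scope.

Definition relint_simplex (R : realType) (K : nat) (p : 'I_K -> R) : Prop :=
  (forall k, 0 < p k < 1) /\ \sum_(k < K) p k = 1.

(* alpha-divergence (Bregman divergence of -S_alpha), alpha <> 0,1,
   for positive vectors; real powers via powR. *)
Definition Dalpha (R : realType) (K : nat) (alpha : R) (p q : 'I_K -> R) : R :=
  alpha^-1 * \sum_(k < K)
    ((p k `^ alpha + (alpha - 1) * q k `^ alpha
      - alpha * p k * q k `^ (alpha - 1)) / (alpha - 1)).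

Definition norm1 (R : realType) (K : nat) (x : 'I_K -> R) : R :=
  \sum_(k < K) `|x k|.

Definition C2K (R : realType) (K : nat) : R :=
  if ~~ odd K then (K%:R)^-1
  else (K%:R)^-1 * ((K%:R) ^+ 2 / ((K%:R) ^+ 2 - 1)).

(* Main.v *)
Require Import Defs.
From HB Require Import structures.
From mathcomp Require Import all_boot all_order all_algebra.
From mathcomp Require Import all_classical all_reals all_analysis.
From mathcomp Require Import ring lra zify.
Import Order.TTheory GRing.Theory Num.Theory.
Import numFieldNormedType.Exports.
Local Open Scope ring_scope.

Section Analytic.
Variable R : realType.
Local Open Scope classical_set_scope.

Lemma daff (k c z : R) : is_derive z 1 (fun a : R => k * a + c) k.
Proof.
have H := @is_deriveD _ _ _ (k \*: id) (cst c) z 1 _ _ (is_deriveZ k (is_derive_id z 1)) (is_derive_cst c z 1).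
have -> : (fun a : R => k * a + c) = (k \*: id + cst c) by apply/funext => a.
apply: is_derive_eq H _.
by rewrite addr0 /GRing.scale /= mulr1.
Qed.

Lemma dquad (w2 w1 w0 z : R) :
  is_derive z 1 (fun a : R => w2 * a ^+ 2 + (w1 * a + w0)) (w2 * (2 * z) + w1).
Proof.
have H1 := is_deriveZ w2 (@is_deriveX _ _ (@id R) 2 z 1 1 (is_derive_id z 1)).
have H := @is_deriveD _ _ _ (w2 \*: ((@id R) ^+ 2)) (fun a : R => w1 * a + w0) z 1 _ _ H1 (daff w1 w0 z).
have -> : (fun a : R => w2 * a ^+ 2 + (w1 * a + w0)) = (w2 \*: ((@id R) ^+ 2)) + (fun a : R => w1 * a + w0) by apply/funext => a.
apply: is_derive_eq H _.
rewrite /GRing.scale /= mulr1 expr1; congr (_ + _); congr (_ * _).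
Qed.

Definition G (u e1 v e2 w2 w1 w0 : R) (x : R) :=
  u * x `^ e1 + (v * x `^ e2 + (w2 * x ^+ 2 + (w1 * x + w0))).

Definition dGf (u e1 v e2 w2 w1 w0 : R) (z : R) :=
  u * (e1 * z `^ (e1 - 1)) + (v * (e2 * z `^ (e2 - 1)) + (w2 * (2 * z) + w1)).

Lemma dG (u e1 v e2 w2 w1 w0 z : R) : 0 < z ->
  is_derive z 1 (G u e1 v e2 w2 w1 w0) (dGf u e1 v e2 w2 w1 w0 z).
Proof.
move=> z0.
have P1 := is_deriveZ u (is_derive1_powR e1 z0).
have P2 := is_deriveZ v (is_derive1_powR e2 z0).
have H2 := @is_deriveD _ _ _ (v \*: (fun a : R => a `^ e2)) (fun a : R => w2 * a ^+ 2 + (w1 * a + w0)) z 1 _ _ P2 (dquad w2 w1 w0 z).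
have H := @is_deriveD _ _ _ (u \*: (fun a : R => a `^ e1)) _ z 1 _ _ P1 H2.
have -> : G u e1 v e2 w2 w1 w0 = (u \*: (fun a : R => a `^ e1)) + ((v \*: (fun a : R => a `^ e2)) + (fun a : R => w2 * a ^+ 2 + (w1 * a + w0))) by apply/funext => a.
exact: H.
Qed.

Lemma mono_up (f df : R -> R) (x y : R) : 0 < x -> x <= y ->
  (forall z : R, 0 < z -> is_derive z 1 f (df z)) ->
  (forall z : R, x <= z <= y -> 0 <= df z) -> f x <= f y.
Proof.
move=> x0 xy hd hs.
have cont : {within `[x, y]%classic, continuous f}.
  apply: derivable_within_continuous => z; rewrite in_itv /= => /andP[xz _].
  have := hd z (lt_le_trans x0 xz); by case.
have hd' : forall z : R, z \in `]x, y[%R -> is_derive z 1 f (df z).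
  move=> z; rewrite in_itv /= => /andP[xz _]; exact: hd (lt_trans x0 xz).
have [c cI E] := MVT_segment xy hd' cont.
move: cI; rewrite in_itv /= => /andP[xc cy].
rewrite -subr_ge0 E mulr_ge0 // ?subr_ge0 //; apply: hs; lra.
Qed.

Lemma mono_down (f df : R -> R) (x y : R) : 0 < x -> x <= y ->
  (forall z : R, 0 < z -> is_derive z 1 f (df z)) ->
  (forall z : R, x <= z <= y -> df z <= 0) -> f y <= f x.
Proof.
move=> x0 xy hd hs.
have := @mono_up (fun z => - f z) (fun z => - df z) x y x0 xy.
rewrite lerN2; apply.
  move=> z z0; exact: (@is_deriveN _ _ _ f z 1 (df z) (hd z z0)).
by move=> z /hs; rewrite oppr_ge0.
Qed.

Lemma pw1 (x r : R) : 0 < x -> x `^ (r + 1) = x * x `^ r.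
Proof.
move=> x0; rewrite powRD; last by apply/implyP => _; rewrite gt_eqF.
by rewrite powRr1 ?ltW // mulrC.
Qed.

Lemma powle (r x y : R) : 0 <= r -> 0 <= x -> x <= y -> x `^ r <= y `^ r.
Proof.
move=> r0 x0 xy; apply: (ge0_ler_powR r0) => //; rewrite nnegrE //.
exact: le_trans xy.
Qed.

Lemma tangent (be a b : R) : 1 <= be -> 0 < a -> 0 < b ->
  b `^ be + be * b `^ (be - 1) * (a - b) <= a `^ be.
Proof.
move=> b1 a0 b0.
pose w1 := - (be * b `^ (be - 1)).
pose w0 := be * b `^ (be - 1) * b - b `^ be.
suff : G 1 be 0 0 0 w1 w0 b <= G 1 be 0 0 0 w1 w0 a.
  rewrite /G /w1 /w0; nra.
have hd : forall z : R, 0 < z -> is_derive z 1 (G 1 be 0 0 0 w1 w0) (dGf 1 be 0 0 0 w1 w0 z).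
  by move=> z z0; apply: dG.
have [ba|ab] := lerP b a.
  apply: (mono_up _ _ _ _ b0 ba hd) => z /andP[bz _].
  have : b `^ (be - 1) <= z `^ (be - 1) by apply: powle; lra.
  rewrite /dGf /w1; nra.
apply: (mono_down _ _ _ _ a0 (ltW ab) hd) => z /andP[az zb].
have : z `^ (be - 1) <= b `^ (be - 1) by apply: powle; lra.
rewrite /dGf /w1; nra.
Qed.

Lemma pows (al x : R) : 0 < x ->
  x `^ (al - 1) = x * x `^ (al - 2) /\ x `^ al = x * (x * x `^ (al - 2)).
Proof.
move=> x0.
have e1 : al - 1 = (al - 2) + 1 by ring.
have e2 : al = (al - 1) + 1 by ring.
have h1 : x `^ (al - 1) = x * x `^ (al - 2) by rewrite e1 pw1.
split => //.
by rewrite {1}e2 pw1 // h1.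
Qed.

Definition T (al a b : R) := a `^ al + (al - 1) * b `^ al - al * a * b `^ (al - 1).

Lemma tangent2 (al a b : R) : 2 < al -> 0 < a -> 0 < b ->
  a `^ (al - 1) - b `^ (al - 1) - (al - 1) * b `^ (al - 2) * (a - b) >= 0.
Proof.
move=> al2 a0 b0.
have := @tangent (al - 1) a b ltac:(lra) a0 b0.
have -> : al - 1 - 1 = al - 2 by ring.
lra.
Qed.

Lemma P3 (al a b m : R) : 2 < al -> 0 < a -> 0 < b -> 0 <= m -> m <= b ->
  (al - 1) * m `^ (al - 2) * (a - b) ^+ 2 <= T al a b.
Proof.
move=> al2 a0 b0 m0 mb.
have hm : m `^ (al - 2) <= b `^ (al - 2) by apply: powle; lra.
have X1 := tangent2 _ _ _ al2 a0 b0.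
have [ea1 ea] := pows al _ a0.
have [eb1 eb] := pows al _ b0.
rewrite /T ea eb ea1 eb1 in X1 *.
set A := a `^ (al - 2) in X1 *; set B := b `^ (al - 2) in hm X1 *.
have hA : 0 <= A by apply: powR_ge0.
have hB : 0 <= B by apply: powR_ge0.
have h1 : 0 <= a * (a * A - b * B - (al - 1) * B * (a - b)) by apply: mulr_ge0; lra.
have h2 : (al - 1) * m `^ (al - 2) * (a - b) ^+ 2 <= (al - 1) * B * (a - b) ^+ 2.
  apply: ler_wpM2r; first exact: sqr_ge0.
  apply: ler_wpM2l; lra.
nra.
Qed.

Lemma P2 (al a b m : R) : 2 < al -> 0 < a -> 0 < b -> 0 <= m -> m <= a ->
  m `^ (al - 2) * (a - b) ^+ 2 <= T al a b.
Proof.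
move=> al2 a0 b0 m0 ma.
have hm : m `^ (al - 2) <= a `^ (al - 2) by apply: powle; lra.
have X1 := tangent2 _ _ _ al2 a0 b0.
have X2 := tangent2 _ _ _ al2 b0 a0.
have [ea1 ea] := pows al _ a0.
have [eb1 eb] := pows al _ b0.
rewrite /T ea eb ea1 eb1 in X1 X2 *.
set A := a `^ (al - 2) in X1 X2 hm *; set B := b `^ (al - 2) in X1 X2 *.
have hA : 0 <= A by apply: powR_ge0.
have hB : 0 <= B by apply: powR_ge0.
have key : (al - 1) * (a * (a * A) + (al - 1) * (b * (b * B)) - al * a * (b * B) - A * (a - b) ^+ 2)
   = b * (al * (a * A - b * B - (al - 1) * B * (a - b)) + (b * B - a * A - (al - 1) * A * (b - a))).
  ring.
have h1 : 0 <= a * (a * A) + (al - 1) * (b * (b * B)) - al * a * (b * B) - A * (a - b) ^+ 2.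
  have : 0 <= (al - 1) * (a * (a * A) + (al - 1) * (b * (b * B)) - al * a * (b * B) - A * (a - b) ^+ 2).
    rewrite key; apply: mulr_ge0; first lra.
    apply: addr_ge0 => //; apply: mulr_ge0; lra.
  rewrite pmulr_rge0 //; lra.
have h2 : m `^ (al - 2) * (a - b) ^+ 2 <= A * (a - b) ^+ 2.
  by apply: ler_wpM2r; first exact: sqr_ge0.
lra.
Qed.

Lemma H2 (al a b : R) : 2 < al -> 0 < b -> b <= a ->
  al * (al - 1) / 2 * b `^ (al - 2) * (a - b) ^+ 2 <= T al a b.
Proof.
move=> al2 b0 ba.
have a0 : 0 < a by lra.
pose c := al * (al - 1) / 2.
pose B := b `^ (al - 2).
pose B1 := b `^ (al - 1).
pose w2 := - (c * B).
pose w1 := - (al * B1) + 2 * c * B * b.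
have hd : forall z : R, 0 < z -> is_derive z 1 (G 1 al 0 0 w2 w1 0) (dGf 1 al 0 0 w2 w1 0 z).
  by move=> z z0; apply: dG.
have mono : G 1 al 0 0 w2 w1 0 b <= G 1 al 0 0 w2 w1 0 a.
  apply: (mono_up _ _ _ _ b0 ba hd) => z /andP[bz _].
  have z0 : 0 < z by lra.
  have X := tangent2 _ _ _ al2 z0 b0.
  have : 0 <= al * (z `^ (al - 1) - b `^ (al - 1) - (al - 1) * b `^ (al - 2) * (z - b)).
    apply: mulr_ge0; lra.
  rewrite /dGf /w2 /w1 /c /B /B1.
  set P := z `^ (al - 1); set Q := b `^ (al - 1); set S := b `^ (al - 2).
  move=> h.
  have -> : 1 * (al * z `^ (al - 1)) + (0 * (0 * z `^ (0 - 1)) + (- (al * (al - 1) / 2 * S) * (2 * z) + (- (al * Q) + 2 * (al * (al - 1) / 2) * S * b)))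
     = al * (P - Q - (al - 1) * S * (z - b)) by rewrite /P; field.
  exact: h.
move: mono.
rewrite /G /T /w2 /w1 /c /B /B1.
set P := a `^ al; set Q := b `^ al; set S := b `^ (al - 2); set U := b `^ (al - 1).
have [eb1 eb] := pows al _ b0.
rewrite -/U -/Q -/S in eb1 eb.
move=> h.
rewrite eb1 eb; rewrite eb1 eb in h.
nra.
Qed.


Lemma H3 (al a b : R) : 2 < al -> 0 < a -> a <= b ->
  al * (al - 1) / 2 * a `^ (al - 2) * (a - b) ^+ 2 <= T al a b.
Proof.
move=> al2 a0 ab.
have b0 : 0 < b by lra.
pose c := al * (al - 1) / 2.
pose A := a `^ (al - 2).
pose w2 := - (c * A).
pose w1 := 2 * c * A * a.
have hd : forall z : R, 0 < z -> is_derive z 1 (G (al - 1) al (- (al * a)) (al - 1) w2 w1 0) (dGf (al - 1) al (- (al * a)) (al - 1) w2 w1 0 z).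
  by move=> z z0; apply: dG.
have mono : G (al - 1) al (- (al * a)) (al - 1) w2 w1 0 a <= G (al - 1) al (- (al * a)) (al - 1) w2 w1 0 b.
  apply: (mono_up _ _ _ _ a0 ab hd) => z /andP[az _].
  have z0 : 0 < z by lra.
  have hZ : A <= z `^ (al - 2) by apply: powle; lra.
  have [ez1 _] := pows al _ z0.
  have e2 : al - 1 - 1 = al - 2 by ring.
  rewrite /dGf /w2 /w1 /c e2 ez1.
  set Z := z `^ (al - 2) in hZ *.
  have -> : (al - 1) * (al * (z * Z)) + (- (al * a) * ((al - 1) * Z) + (- (al * (al - 1) / 2 * A) * (2 * z) + (2 * (al * (al - 1) / 2) * A * a)))
     = al * (al - 1) * ((z - a) * (Z - A)) by field.
  apply: mulr_ge0; first (apply: mulr_ge0; lra).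
  apply: mulr_ge0; lra.
move: mono.
rewrite /G /T /w2 /w1 /c /A.
have [ea1 ea] := pows al _ a0.
rewrite ea1 ea.
set S := a `^ (al - 2); set P := b `^ al; set U := b `^ (al - 1).
move=> h.
nra.
Qed.

Lemma P1 (al a b m : R) : 2 < al -> 0 < a -> 0 < b -> 0 <= m -> m <= a -> m <= b ->
  al * (al - 1) / 2 * m `^ (al - 2) * (a - b) ^+ 2 <= T al a b.
Proof.
move=> al2 a0 b0 m0 ma mb.
have c0 : 0 <= al * (al - 1) / 2 by apply: divr_ge0; [apply: mulr_ge0|]; lra.
have [ab|ba] := lerP a b.
  apply: le_trans (H3 _ _ _ al2 a0 ab).
  apply: ler_wpM2r; first exact: sqr_ge0.
  apply: ler_wpM2l => //; apply: powle; lra.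
apply: le_trans (H2 _ _ _ al2 b0 (ltW ba)).
apply: ler_wpM2r; first exact: sqr_ge0.
apply: ler_wpM2l => //; apply: powle; lra.
Qed.
End Analytic.
Arguments T {R}.

Section Comb.
Variable R : realType.

Lemma comb (K a b : nat) : (1 <= a)%N -> (1 <= b)%N -> (a + b <= K)%N ->
  4 * C2K R K * (a%:R * b%:R) <= a%:R + b%:R.
Proof.
move=> a1 b1 abK.
have ra : (1 : R) <= a%:R by rewrite ler1n.
have rb : (1 : R) <= b%:R by rewrite ler1n.
have rn : (a%:R + b%:R : R) <= K%:R by rewrite -natrD ler_nat.
set A := (a%:R : R) in ra rn *; set B := (b%:R : R) in rb rn *.
set k := (K%:R : R) in rn *.
have k0 : 0 < k by lra.
have kk : k * k^-1 = 1 by rewrite mulfV // gt_eqF.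
have ki : 0 <= k^-1 by rewrite invr_ge0 ltW.
rewrite /C2K -/k.
case: ifP => oK.
  have s1 : 0 <= (A - B) ^+ 2 by apply: sqr_ge0.
  have s2 : 0 <= (A + B) * (k - (A + B)) by apply: mulr_ge0; lra.
  have h1 : 4 * (A * B) <= (A + B) * k by nra.
  have s3 : 0 <= k^-1 * ((A + B) * k - 4 * (A * B)) by apply: mulr_ge0; lra.
  nra.
have d0 : 0 < k ^+ 2 - 1 by nra.
have e : k^-1 * (k ^+ 2 / (k ^+ 2 - 1)) = k / (k ^+ 2 - 1).
  by field; apply/andP; split; rewrite gt_eqF.
rewrite e.
have dd : (k ^+ 2 - 1) * (k ^+ 2 - 1)^-1 = 1 by rewrite mulfV // gt_eqF.
have di : 0 <= (k ^+ 2 - 1)^-1 by rewrite invr_ge0 ltW.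
suff h : 4 * k * (A * B) <= (A + B) * (k ^+ 2 - 1).
  have s3 : 0 <= (k ^+ 2 - 1)^-1 * ((A + B) * (k ^+ 2 - 1) - 4 * k * (A * B)) by apply: mulr_ge0; lra.
  nra.
have [e2|ne] := eqVneq (a + b)%N K.
  have ab : a != b.
    apply/eqP => eab; move: oK; rewrite -e2 eab addnn odd_double //.
  have hab : 1 <= (A - B) ^+ 2.
    rewrite /A /B; have : (a < b)%N || (b < a)%N by rewrite -neq_ltn.
    case/orP => h.
      have : (a%:R + 1 : R) <= b%:R by rewrite natr1 ler_nat.
      nra.
    have : (b%:R + 1 : R) <= a%:R by rewrite natr1 ler_nat.
    nra.
  have ek : A + B = k by rewrite /A /B /k -natrD e2.
  have h4 : 4 * (A * B) <= k ^+ 2 - 1.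
    rewrite -ek; nra.
  have : 0 <= k * (k ^+ 2 - 1 - 4 * (A * B)) by apply: mulr_ge0; lra.
  rewrite ek; nra.
have rn1 : A + B + 1 <= k.
  have : (a + b < K)%N by rewrite ltn_neqAle ne abK.
  by rewrite /A /B /k -natrD natr1 ler_nat.
have s1 : 0 <= (A - B) ^+ 2 by apply: sqr_ge0.
have s2 : 0 <= (A + B) * (k - 1 - (A + B)) by apply: mulr_ge0; lra.
have h4 : 4 * (A * B) <= (A + B) * (k - 1) by nra.
have : 0 <= k * ((A + B) * (k - 1) - 4 * (A * B)) by apply: mulr_ge0; lra.
have : 0 <= (A + B) * (k - 1) by apply: mulr_ge0; lra.
nra.
Qed.

Lemma CS (K : nat) (P : pred 'I_K) (y : 'I_K -> R) :
  (\sum_(k < K | P k) y k) ^+ 2 <= #|P|%:R * \sum_(k < K | P k) y k ^+ 2.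
Proof.
have [n0|np] := posnP #|P|.
  rewrite (eq_bigl pred0); first by rewrite big_pred0 // expr0n /= n0 mul0r.
  by move=> k; have := card0_eq n0 k.
set S := \sum_(k < K | P k) y k.
set Q := \sum_(k < K | P k) y k ^+ 2.
set n : R := #|P|%:R.
have n0 : 0 < n by rewrite ltr0n.
have h : 0 <= \sum_(k < K | P k) (n * y k - S) ^+ 2 by apply: sumr_ge0 => k _; apply: sqr_ge0.
have e : \sum_(k < K | P k) (n * y k - S) ^+ 2 = n * (n * Q - S ^+ 2).
  rewrite (eq_bigr (fun k => n ^+ 2 * y k ^+ 2 - (2 * n * S) * y k + S ^+ 2)); last first.
    by move=> k _; ring.
  rewrite big_split sumrB /= -!mulr_sumr.
  have -> : \sum_(i < K | P i) S = S *+ #|P| by rewrite sumr_const.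
  rewrite -/S -/Q -mulr_natr -/n; ring.
rewrite e in h.
have : 0 <= n * Q - S ^+ 2 by rewrite -(pmulr_rge0 _ n0).
lra.
Qed.

Lemma sumsq (K : nat) (x : 'I_K -> R) : \sum_(k < K) x k = 0 ->
  C2K R K * (norm1 x) ^+ 2 <= \sum_(k < K) x k ^+ 2.
Proof.
move=> hs.
set SP := \sum_(k < K | 0 < x k) x k.
set SN := \sum_(k < K | x k < 0) x k.
set QP := \sum_(k < K | 0 < x k) x k ^+ 2.
set QN := \sum_(k < K | x k < 0) x k ^+ 2.
have eS : \sum_(k < K) x k = SP + SN.
  rewrite /SP /SN [X in _ = X + _]big_mkcond [X in _ = _ + X]big_mkcond -big_split /=.
  by apply: eq_bigr => k _; case: (ltgtP (x k) 0) => h; rewrite ?addr0 ?add0r.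
have eN : norm1 x = SP - SN.
  rewrite /norm1 /SP /SN [X in _ = X - _]big_mkcond [X in _ = _ - X]big_mkcond -sumrB /=.
  apply: eq_bigr => k _; case: (ltgtP (x k) 0) => h; rewrite ?subr0 ?sub0r.
  - by rewrite ltr0_norm.
  - by rewrite gtr0_norm.
  - by rewrite h normr0.
have eQ : \sum_(k < K) x k ^+ 2 = QP + QN.
  rewrite /QP /QN [X in _ = X + _]big_mkcond [X in _ = _ + X]big_mkcond -big_split /=.
  apply: eq_bigr => k _; case: (ltgtP (x k) 0) => h; rewrite ?addr0 ?add0r //.
  by rewrite h expr0n.
have QP0 : 0 <= QP by apply: sumr_ge0 => k _; apply: sqr_ge0.
have QN0 : 0 <= QN by apply: sumr_ge0 => k _; apply: sqr_ge0.
pose PP : pred 'I_K := fun k => 0 < x k.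
pose NN : pred 'I_K := fun k => x k < 0.
have cP : SP ^+ 2 <= #|PP|%:R * QP := CS _ PP x.
have cN : SN ^+ 2 <= #|NN|%:R * QN := CS _ NN x.
have eSN : SN = - SP by lra.
rewrite eN eQ eSN.
have card : (#|PP| + #|NN| <= K)%N.
  have : (#|NN| <= #|predC PP|)%N.
    apply: subset_leq_card; apply/fintype.subsetP => k.
    rewrite /NN /PP !inE /= => h; rewrite -leNgt ltW //.
  have := cardC PP; rewrite card_ord => e.
  move=> h; apply: leq_trans (_ : #|PP| + #|predC PP| <= K)%N; [by rewrite leq_add2l | by rewrite e].
move: cP cN card.
set a := #|PP|; set b := #|NN|.
move=> cP cN card.
rewrite eSN sqrrN in cN.
have [a0|a1] := posnP a.
  rewrite a0 mul0r in cP.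
  have -> : SP = 0 by apply/eqP; rewrite -sqrf_eq0 eq_le cP sqr_ge0.
  have -> : (0 - - 0 : R) ^+ 2 = 0 by rewrite oppr0 subrr expr0n.
  rewrite mulr0; lra.
have [b0|b1] := posnP b.
  rewrite b0 mul0r in cN.
  have -> : SP = 0 by apply/eqP; rewrite -sqrf_eq0 eq_le cN sqr_ge0.
  have -> : (0 - - 0 : R) ^+ 2 = 0 by rewrite oppr0 subrr expr0n.
  rewrite mulr0; lra.
have hc := comb _ _ _ a1 b1 card.
set C := C2K R K in hc *.
set A : R := a%:R in cP hc; set B : R := b%:R in cN hc.
have A0 : 0 < A by rewrite ltr0n.
have B0 : 0 < B by rewrite ltr0n.
have hAB : 0 < A * B by apply: mulr_gt0.
rewrite -(ler_pM2l hAB).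
have s1 : 0 <= SP ^+ 2 by apply: sqr_ge0.
have : (A * B) * (4 * C * SP ^+ 2) <= (A + B) * SP ^+ 2.
  have -> : (A * B) * (4 * C * SP ^+ 2) = (4 * C * (A * B)) * SP ^+ 2 by ring.
  by apply: ler_wpM2r.
have : B * SP ^+ 2 <= B * (A * QP) by apply: ler_wpM2l; lra.
have : A * SP ^+ 2 <= A * (B * QN) by apply: ler_wpM2l; lra.
have -> : C * (SP - - SP) ^+ 2 = 4 * C * SP ^+ 2 by ring.
nra.
Qed.
End Comb.

Section Main.
Variable R : realType.

Lemma Dge (K : nat) (al : R) (p q : 'I_K -> R) (ka : R) : 2 < al ->
  (forall k, ka * (p k - q k) ^+ 2 <= T al (p k) (q k)) -> 0 <= ka ->
  \sum_(k < K) (p k - q k) = 0 ->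
  ka / (al * (al - 1)) * (C2K R K * norm1 (fun k => p k - q k) ^+ 2) <= Dalpha al p q.
Proof.
move=> al2 hT ka0 hs.
have hq := sumsq _ _ _ hs.
have a0 : 0 < al by lra.
have a1 : 0 < al - 1 by lra.
have e : Dalpha al p q = al^-1 * (al - 1)^-1 * \sum_(k < K) T al (p k) (q k).
  rewrite /Dalpha -mulrA; congr (_ * _); rewrite mulr_sumr.
  by apply: eq_bigr => k _; rewrite /T mulrC.
rewrite e.
have h1 : ka * \sum_(k < K) (p k - q k) ^+ 2 <= \sum_(k < K) T al (p k) (q k).
  rewrite mulr_sumr; apply: ler_sum => k _; exact: hT.
have h2 : ka * (C2K R K * norm1 (fun k => p k - q k) ^+ 2) <= \sum_(k < K) T al (p k) (q k).
  apply: le_trans h1; exact: ler_wpM2l.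
have -> : ka / (al * (al - 1)) * (C2K R K * norm1 (fun k => p k - q k) ^+ 2)
   = al^-1 * (al - 1)^-1 * (ka * (C2K R K * norm1 (fun k => p k - q k) ^+ 2)).
  by rewrite invfM; ring.
apply: ler_wpM2l => //; apply: mulr_ge0; rewrite invr_ge0; lra.
Qed.

End Main.

Theorem proposition3 (R : realType) (K : nat) (alpha : R)
  (halpha : 2 < alpha) (hK : (3 <= K)%N) (p q : 'I_K -> R)
  (hp : relint_simplex p) (hq : relint_simplex q) :
  let pq := fun k => p k - q k in
  let mpq := \big[Num.min/1]_(k < K) Num.min (p k) (q k) in
  let mp := \big[Num.min/1]_(k < K) p k in
  let mq := \big[Num.min/1]_(k < K) q k in
  [/\ Dalpha alpha p q >= (C2K R K * mpq `^ (alpha - 2)) / 2 * norm1 pq ^+ 2,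
      Dalpha alpha p q >= (C2K R K * (2 / (alpha * (alpha - 1))) * mp `^ (alpha - 2))
                            / 2 * norm1 pq ^+ 2
    & Dalpha alpha p q >= (C2K R K * (2 / alpha) * mq `^ (alpha - 2)) / 2 * norm1 pq ^+ 2].
Proof.
move=> pq mpq mp mq.
case: hp => hp1 hp2; case: hq => hq1 hq2.
have p0 : forall k, 0 < p k by move=> k; case/andP: (hp1 k).
have q0 : forall k, 0 < q k by move=> k; case/andP: (hq1 k).
have hs : \sum_(k < K) (p k - q k) = 0 by rewrite sumrB hp2 hq2 subrr.
have a0 : 0 < alpha by lra.
have a1 : 0 < alpha - 1 by lra.
have mpq0 : 0 < mpq.
  apply: lt_bigmin => // i _; rewrite lt_min; apply/andP; split; [exact: p0 | exact: q0].
have mp0 : 0 < mp by apply: lt_bigmin => // i _; exact: p0.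
have mq0 : 0 < mq by apply: lt_bigmin => // i _; exact: q0.
have mpqp : forall k, mpq <= p k.
  move=> k; apply: le_trans (bigmin_le _ k _) _; by rewrite ge_min lexx.
have mpqq : forall k, mpq <= q k.
  move=> k; apply: le_trans (bigmin_le _ k _) _; by rewrite ge_min lexx orbT.
have mpp : forall k, mp <= p k by move=> k; exact: bigmin_le.
have mqq : forall k, mq <= q k by move=> k; exact: bigmin_le.
have hM : forall c, 0 <= c -> forall ka, ka = c * (alpha * (alpha - 1)) -> 
    ka / (alpha * (alpha - 1)) * (C2K R K * norm1 pq ^+ 2) = c * C2K R K * norm1 pq ^+ 2.
  move=> c _ ka ->; field; rewrite !gt_eqF //.
split.
- have := @Dge R K alpha p q (alpha * (alpha - 1) / 2 * mpq `^ (alpha - 2)) halpha.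
  rewrite (hM (mpq `^ (alpha - 2) / 2)); last by field.
  + have -> : C2K R K * mpq `^ (alpha - 2) / 2 * norm1 pq ^+ 2 = mpq `^ (alpha - 2) / 2 * C2K R K * norm1 pq ^+ 2 by ring.
    apply.
    * move=> k; apply: P1; [exact: halpha | exact: p0 | exact: q0 | exact: ltW | exact: mpqp | exact: mpqq].
    * apply: mulr_ge0; [apply: divr_ge0; [apply: mulr_ge0|]; lra | exact: powR_ge0].
    * exact: hs.
  + apply: divr_ge0; [exact: powR_ge0 | lra].
- have := @Dge R K alpha p q (mp `^ (alpha - 2)) halpha.
  rewrite (hM (2 / (alpha * (alpha - 1)) * mp `^ (alpha - 2) / 2)); last by field; rewrite !gt_eqF.
  + have -> : C2K R K * (2 / (alpha * (alpha - 1))) * mp `^ (alpha - 2) / 2 * norm1 pq ^+ 2 = 2 / (alpha * (alpha - 1)) * mp `^ (alpha - 2) / 2 * C2K R K * norm1 pq ^+ 2 by ring.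
    apply.
    * move=> k; apply: P2; [exact: halpha | exact: p0 | exact: q0 | exact: ltW | exact: mpp].
    * exact: powR_ge0.
    * exact: hs.
  + apply: divr_ge0; last lra.
    apply: mulr_ge0; last exact: powR_ge0.
    apply: divr_ge0; [lra | apply: mulr_ge0; lra].
- have := @Dge R K alpha p q ((alpha - 1) * mq `^ (alpha - 2)) halpha.
  rewrite (hM (2 / alpha * mq `^ (alpha - 2) / 2)); last by field; rewrite !gt_eqF.
  + have -> : C2K R K * (2 / alpha) * mq `^ (alpha - 2) / 2 * norm1 pq ^+ 2 = 2 / alpha * mq `^ (alpha - 2) / 2 * C2K R K * norm1 pq ^+ 2 by ring.
    apply.
    * move=> k; apply: P3; [exact: halpha | exact: p0 | exact: q0 | exact: ltW | exact: mqq].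
    * apply: mulr_ge0; [lra | exact: powR_ge0].
    * exact: hs.
  + apply: divr_ge0; last lra.
    apply: mulr_ge0; last exact: powR_ge0.
    apply: divr_ge0; lra.
Qed.
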